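(* Let $(x_t)_{t\in\Omega}$ be a continuous frame for a finite dimensional Hilbert space $H$. Then $(x_t)_{t\in\Omega}$ does phase retrieval if and only if $(x_t)_{t\in\Omega}$ does $C$-stable phase retrieval for some constant $C>0$.
   Context: $H$ is a real or complex Hilbert space. A continuous frame $(x_t)_{t\in\Omega}$ over a measure space $(\Omega,\mu)$ satisfies $A\|x\|^2\le\int_\Omega|\langle x,x_t\rangle|^2d\mu\le B\|x\|^2$ for all $x\in H$ with $B\ge A>0$; its analysis operator is $\Theta(x)=(\langle x,x_t\rangle)_{t\in\Omega}\in L_2(\Omega)$ and $|\Theta x|=(|\langle x,x_t\rangle|)_{t\in\Omega}$. The frame does phase retrieval if whenever $x,y\in H$ satisfy $|\Theta x|=|\Theta y|$ (as elements of $L_2(\Omega)$) there is a scalar $|\lambda|=1$ with $x=\lambda y$. For $C>0$ it does $C$-stable phase retrieval if $\min_{|\lambda|=1}\|x-\lambda y\|\le C\||\Theta x|-|\Theta y|\|$ for all $x,y\in H$. *)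

(* Defs.v *)
From HB Require Import structures.
From mathcomp Require Import all_boot all_order all_algebra.
From mathcomp Require Import all_classical all_reals all_analysis.
From mathcomp Require Import complex.

Set Implicit Arguments.
Unset Strict Implicit.
Unset Printing Implicit Defensive.

Import Order.TTheory GRing.Theory Num.Theory.
Local Open Scope ring_scope.

(* A finite dimensional Hilbert space over the scalar field K (K = R or
   K = R[i]) is modelled, up to isometric isomorphism, as K^n = 'rV[K]_n with
   the standard inner product <x,y> = \sum_i x_i * conj (y_i). *)
Section ContinuousFrames.
Variables (R : realType) (K : numFieldType) (conj : K -> K) (absK : K -> R).
Variables (d : measure_display) (T : measurableType d)
  (mu : {measure set T -> \bar R}) (n : nat).

Definition ip (x y : 'rV[K]_n) : K := \sum_(i < n) x ord0 i * conj (y ord0 i).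

Definition hnorm (x : 'rV[K]_n) : R := Num.sqrt (absK (ip x x)).

Definition absTheta (xt : T -> 'rV[K]_n) (x : 'rV[K]_n) : T -> R :=
  fun t => absK (ip x (xt t)).

Definition is_continuous_frame (xt : T -> 'rV[K]_n) : Prop :=
  (forall x, measurable_fun setT (absTheta xt x)) /\
  exists A B : R, 0 < A /\ A <= B /\
    forall x : 'rV[K]_n,
      ((A * hnorm x ^+ 2)%:E <= \int[mu]_t ((absTheta xt x t) ^+ 2)%:E)%E /\
      (\int[mu]_t ((absTheta xt x t) ^+ 2)%:E <= (B * hnorm x ^+ 2)%:E)%E.

(* phase retrieval: |Theta x| = |Theta y| in L_2 (i.e. mu-a.e.) implies
   x = lambda y for some unimodular scalar lambda. *)
Definition does_phase_retrieval (xt : T -> 'rV[K]_n) : Prop :=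
  forall x y : 'rV[K]_n,
    {ae mu, forall t, absTheta xt x t = absTheta xt y t} ->
    exists lam : K, absK lam = 1 /\ x = lam *: y.

(* C-stable phase retrieval:
   min_{|lambda|=1} ||x - lambda y|| <= C || |Theta x| - |Theta y| ||_{L_2}.
   (The minimum over the compact unit circle is attained, so "min <= c"
   is "some unimodular lambda achieves <= c".) *)
Definition does_stable_phase_retrieval (C : R) (xt : T -> 'rV[K]_n) : Prop :=
  forall x y : 'rV[K]_n,
    exists lam : K, absK lam = 1 /\
      ((hnorm (x - lam *: y))%:E <=
        C%:E * Lnorm mu 2%:E (fun t => (absTheta xt x t - absTheta xt y t)%:E))%E.

End ContinuousFrames.

Definition corollary2p3_for (R : realType) (K : numFieldType)
  (conj : K -> K) (absK : K -> R) : Prop :=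
  forall (d : measure_display) (T : measurableType d)
    (mu : {measure set T -> \bar R}) (n : nat) (xt : T -> 'rV[K]_n),
    is_continuous_frame conj absK mu xt ->
    (does_phase_retrieval conj absK mu xt <->
     exists C : R, 0 < C /\ does_stable_phase_retrieval conj absK mu C xt).

(* Main.v *)
Require Import Defs.
From HB Require Import structures.
From mathcomp Require Import all_boot all_order all_algebra.
From mathcomp Require Import all_classical all_reals all_analysis.
From mathcomp Require Import complex.
From mathcomp Require Import measurable_realfun.
From mathcomp Require Import ring lra.

Set Implicit Arguments.
Unset Strict Implicit.
Unset Printing Implicit Defensive.
Import Order.TTheory GRing.Theory Num.Theory.
Import numFieldNormedType.Exports.
Local Open Scope ring_scope.
Local Open Scope classical_set_scope.
Section Topo.
Variables (R : realType) (m : nat).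
Lemma loclip_cont (f : 'rV[R]_m -> R) :
  (forall w, exists k, forall w', `|w' - w| <= 1 -> `|f w' - f w| <= k * `|w' - w|) ->
  continuous f.
Proof.
move=> H w; have [k hk] := H w.
apply/(@cvgrPdist_lt _ _ _ _ (nbhs_filter w)) => eps eps0.
set k' := `|k| + 1.
have k'0 : 0 < k' by rewrite /k' ltr_wpDl.
have d0 : 0 < Num.min 1 (eps / k') by rewrite lt_min ltr01 divr_gt0.
near=> w'.
have hb : `|w' - w| < Num.min 1 (eps / k').
  have : ball w (Num.min 1 (eps / k')) w'.
    near: w'; rewrite near_simpl. by move: (@near_ball R _ w _ d0).
  by rewrite -ball_normE /ball_ /= -normrN opprB.
have h1 : `|w' - w| <= 1 by apply: ltW; apply: lt_le_trans hb _; rewrite ge_min lexx.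
have h2 : `|w' - w| < eps / k' by apply: lt_le_trans hb _; rewrite ge_min lexx orbT.
rewrite -normrN opprB; apply: le_lt_trans (hk _ h1) _.
apply: (@le_lt_trans _ _ (k' * `|w' - w|)).
  by apply: ler_wpM2r => //; rewrite /k' (le_trans (ler_norm _)) // lerDl.
by rewrite mulrC -ltr_pdivlMr.
Unshelve. all: by end_near.
Qed.
End Topo.
Section Topo2.
Variables (R : realType) (m : nat).
Lemma min_ball (f : 'rV[R]_m -> R) : continuous f ->
  exists2 c : 'rV[R]_m, `|c| <= 1 & forall w, `|w| <= 1 -> f c <= f w.
Proof.
move=> cf.
set A := closed_ball (0 : 'rV[R]_m) 1.
have AE w : A w <-> `|w| <= 1.
  by rewrite /A closed_ballE // /closed_ball_ /= sub0r normrN.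
have A0 : A !=set0 by exists 0; apply/AE; rewrite normr0.
have cA : compact A.
  apply: bounded_closed_compact; last exact: closed_ball_closed.
  exists 1; split => // M M1 w /AE h /=; exact: (le_trans h (ltW M1)).
have [c /set_mem /AE c1 hc] := compact_EVT_min A0 cA (continuous_subspaceT cf).
by exists c => // w /AE /mem_set; apply: hc.
Qed.
End Topo2.
Section Alg.
Variables (R : realType) (K : numFieldType) (conj : K -> K) (absK : K -> R)
  (ofR : {rmorphism R -> K}).
Hypothesis conjD : forall a b, conj (a + b) = conj a + conj b.
Hypothesis conjM : forall a b, conj (a * b) = conj a * conj b.
Hypothesis conjK : forall a, conj (conj a) = a.
Hypothesis conjR : forall r, conj (ofR r) = ofR r.
Hypothesis mulJ : forall a, a * conj a = ofR (absK a ^+ 2).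
Hypothesis absM : forall a b, absK (a * b) = absK a * absK b.
Hypothesis absD : forall a b, absK (a + b) <= absK a + absK b.
Hypothesis absR : forall r, absK (ofR r) = `|r|.
Hypothesis abs_ge0 : forall a, 0 <= absK a.
Hypothesis abs_eq0 : forall a, absK a = 0 -> a = 0.
Hypothesis absJ : forall a, absK (conj a) = absK a.
Variable n : nat.
Implicit Types x y z u v : 'rV[K]_n.

Local Notation ip := (ip conj).
Local Notation hn := (hnorm conj absK).

Lemma conj0 : conj 0 = 0.
Proof. by have := conjR 0; rewrite rmorph0. Qed.
Lemma conjN a : conj (- a) = - conj a.
Proof. by apply/eqP; rewrite -subr_eq0 opprK -conjD addNr conj0. Qed.
Lemma abs0 : absK 0 = 0.
Proof. by have := absR 0; rewrite rmorph0 normr0. Qed.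
Lemma absN a : absK (- a) = absK a.
Proof. by rewrite -mulN1r -(rmorphN1 ofR) absM absR normrN normr1 mul1r. Qed.
Lemma absB a b : absK (a - b) = absK (b - a).
Proof. by rewrite -absN opprB. Qed.

Lemma conj_sum (I : finType) (F : I -> K) :
  conj (\sum_i F i) = \sum_i conj (F i).
Proof. exact: (big_morph _ conjD conj0). Qed.

Lemma ipDl x y z : ip (x + y) z = ip x z + ip y z.
Proof. by rewrite /Defs.ip -big_split; apply: eq_bigr => i _; rewrite mxE mulrDl. Qed.
Lemma ipZl a x z : ip (a *: x) z = a * ip x z.
Proof. by rewrite /Defs.ip mulr_sumr; apply: eq_bigr => i _; rewrite mxE mulrA. Qed.
Lemma ipC x y : ip y x = conj (ip x y).
Proof.
rewrite /Defs.ip conj_sum; apply: eq_bigr => i _.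
by rewrite conjM conjK mulrC.
Qed.
Lemma ipDr x y z : ip x (y + z) = ip x y + ip x z.
Proof. by rewrite ipC ipDl conjD -!ipC. Qed.
Lemma ipZr a x y : ip x (a *: y) = conj a * ip x y.
Proof. by rewrite ipC ipZl conjM -ipC. Qed.
Lemma ipNl x y : ip (- x) y = - ip x y.
Proof. by rewrite -scaleN1r ipZl mulN1r. Qed.
Lemma ipNr x y : ip x (- y) = - ip x y.
Proof. by rewrite ipC ipNl conjN -ipC. Qed.
Lemma ipBl x y z : ip (x - y) z = ip x z - ip y z.
Proof. by rewrite ipDl ipNl. Qed.
Lemma ipBr x y z : ip x (y - z) = ip x y - ip x z.
Proof. by rewrite ipDr ipNr. Qed.
Lemma ip0l y : ip 0 y = 0.
Proof. by have := ipZl 0 0 y; rewrite scale0r mul0r. Qed.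

Lemma ip_self x : ip x x = ofR (\sum_i absK (x ord0 i) ^+ 2).
Proof. by rewrite rmorph_sum; apply: eq_bigr => i _; rewrite mulJ. Qed.

Lemma sum_ge0 x : 0 <= \sum_i absK (x ord0 i) ^+ 2.
Proof. by apply: sumr_ge0 => i _; rewrite sqr_ge0. Qed.

Lemma hn2 x : hn x ^+ 2 = \sum_i absK (x ord0 i) ^+ 2.
Proof.
by rewrite /hnorm ip_self absR ger0_norm ?sum_ge0 // sqr_sqrtr // sum_ge0.
Qed.

Lemma hn_ge0 x : 0 <= hn x.
Proof. exact: sqrtr_ge0. Qed.

Lemma ip_selfE x : ip x x = ofR (hn x ^+ 2).
Proof. by rewrite hn2 ip_self. Qed.

Lemma hn_eq0 x : hn x = 0 -> x = 0.
Proof.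
move=> h; have := hn2 x; rewrite h expr0n /= => /esym/psumr_eq0P H.
apply/rowP => i; rewrite mxE; apply: abs_eq0.
have := H (fun j _ => sqr_ge0 _) i isT; by move/eqP; rewrite sqrf_eq0 => /eqP.
Qed.

Lemma hn0 : hn (0 : 'rV[K]_n) = 0.
Proof. by rewrite /hnorm ip0l abs0 sqrtr0. Qed.

Lemma hn_sq_eq x c : 0 <= c -> hn x ^+ 2 = c ^+ 2 -> hn x = c.
Proof. by move=> c0 /eqP; rewrite eqrXn2 ?hn_ge0 // => /eqP. Qed.

Lemma hnZ a x : hn (a *: x) = absK a * hn x.
Proof.
apply: hn_sq_eq; first by rewrite mulr_ge0 ?hn_ge0.
apply: (fmorph_inj ofR); rewrite -ip_selfE ipZl ipZr mulrA mulJ ip_selfE.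
by rewrite -rmorphM exprMn.
Qed.

Lemma hnN x : hn (- x) = hn x.
Proof. by rewrite -scaleN1r hnZ -(rmorphN1 ofR) absR normrN normr1 mul1r. Qed.

Lemma phase x y : exists w, absK w = 1 /\ ip x (w *: y) = ofR (absK (ip x y)).
Proof.
have [e|nz] := eqVneq (ip x y) 0.
  exists 1; split; first by rewrite -(rmorph1 ofR) absR normr1.
  by rewrite scale1r e abs0 rmorph0.
have r0 : absK (ip x y) != 0 by apply: contra nz => /eqP /abs_eq0 ->.
exists (ip x y * ofR (absK (ip x y))^-1); split.
  by rewrite absM absR ger0_norm ?invr_ge0 // divff.
rewrite ipZr conjM conjR mulrAC (mulrC (conj _)) mulJ -rmorphM; congr (ofR _).
by rewrite expr2 -mulrA divff // mulr1.
Qed.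

Lemma expand x y (t r : R) : ip x y = ofR r ->
  ofR (hn (x - ofR t *: y) ^+ 2) = ofR (hn x ^+ 2 - 2 * t * r + t ^+ 2 * hn y ^+ 2).
Proof.
move=> e; rewrite -ip_selfE ipBl !ipBr !ipZl !ipZr conjR ip_selfE e.
rewrite ipC e conjR ip_selfE -!rmorphM -!rmorphB; congr (ofR _); ring.
Qed.

Lemma expandR x y (t r : R) : ip x y = ofR r ->
  hn (x - ofR t *: y) ^+ 2 = hn x ^+ 2 - 2 * t * r + t ^+ 2 * hn y ^+ 2.
Proof. by move=> e; apply: (fmorph_inj ofR); rewrite (expand t e). Qed.

Lemma CS x y : absK (ip x y) <= hn x * hn y.
Proof.
have [w [w1 e]] := phase x y.
set r := absK (ip x y); set p := hn x; set q := hn (w *: y).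
have hq : q = hn y by rewrite /q hnZ w1 mul1r.
have H t : 0 <= p ^+ 2 - 2 * t * r + t ^+ 2 * q ^+ 2.
  by rewrite -(expandR t e) sqr_ge0.
rewrite -hq.
have r0 : 0 <= r := abs_ge0 _.
have p0 : 0 <= p := hn_ge0 _. have q0 : 0 <= q := hn_ge0 _.
have [qz|qnz] := eqVneq q 0.
  rewrite qz mulr0; have [rz|rnz] := eqVneq r 0; first by rewrite rz.
  have := H ((p ^+ 2 + 1) / (2 * r)).
  have -> : 2 * ((p ^+ 2 + 1) / (2 * r)) * r = p ^+ 2 + 1.
    by field; rewrite rnz.
  rewrite qz expr0n /= mulr0 addr0 => h; exfalso; lra.
have := H (r / q ^+ 2).
have -> : p ^+ 2 - 2 * (r / q ^+ 2) * r + (r / q ^+ 2) ^+ 2 * q ^+ 2 =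
          p ^+ 2 - r ^+ 2 / q ^+ 2 by field; rewrite qnz.
move=> h.
have q2 : 0 < q ^+ 2 by rewrite exprn_gt0 // lt_neqAle eq_sym qnz q0.
have h2 : r ^+ 2 <= (p * q) ^+ 2.
  have := ler_wpM2r (ltW q2) h.
  have -> : (p ^+ 2 - r ^+ 2 / q ^+ 2) * q ^+ 2 = (p * q) ^+ 2 - r ^+ 2.
    by field; rewrite qnz.
  by rewrite mul0r subr_ge0.
have pq0 : 0 <= p * q by rewrite mulr_ge0.
nra.
Qed.

Lemma hnD x y : hn (x + y) <= hn x + hn y.
Proof.
have h : hn (x + y) ^+ 2 <= (hn x + hn y) ^+ 2.
  have e : ofR (hn (x + y) ^+ 2) = ofR (hn x ^+ 2 + hn y ^+ 2) + (ip x y + conj (ip x y)).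
    rewrite -ip_selfE ipDl !ipDr !ip_selfE -ipC rmorphD; ring.
  have : absK (ofR (hn (x + y) ^+ 2)) <= hn x ^+ 2 + hn y ^+ 2 + 2 * absK (ip x y).
    rewrite e; apply: le_trans (absD _ _) _.
    rewrite absR ger0_norm ?addr_ge0 ?sqr_ge0 // lerD2l.
    by apply: le_trans (absD _ _) _; rewrite absJ mulr2n mulrDl mul1r lexx.
  rewrite absR ger0_norm ?sqr_ge0 // => h; apply: le_trans h _.
  have := CS x y => h2.
  rewrite sqrrD; lra.
by rewrite -(@ler_pXn2r _ 2) // ?nnegrE ?addr_ge0 ?hn_ge0.
Qed.

Lemma hnB x y : hn (x - y) = hn (y - x).
Proof. by rewrite -hnN opprB. Qed.

Lemma hn_lip x y : `|hn x - hn y| <= hn (x - y).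
Proof.
rewrite ler_norml; apply/andP; split.
  have := hnD (y - x) x; rewrite subrK hnB; lra.
have := hnD (x - y) y; rewrite subrK; lra.
Qed.


Lemma absJmul a : ofR (absK a ^+ 2) = a * conj a.
Proof. by rewrite mulJ. Qed.

Lemma key_ineq (a b r : R) : 0 <= a -> 0 <= b -> 0 <= r -> r <= a * b ->
  (a ^+ 2 + b ^+ 2 - 2 * r) * (a + b) ^+ 2 <=
  4 * (a ^+ 4 + b ^+ 4 - 2 * r ^+ 2).
Proof.
move=> a0 b0 r0 rab.
set S := a ^+ 2 + b ^+ 2; set P := a * b.
have hS : 2 * P <= S.
  rewrite /S /P -subr_ge0; have -> : a^+2+b^+2 - 2*(a*b) = (a-b)^+2 by ring.
  exact: sqr_ge0.
have h1 : (a + b) ^+ 2 <= 2 * S.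
  rewrite /S -subr_ge0; have -> : 2 * (a^+2+b^+2) - (a+b)^+2 = (a-b)^+2 by ring.
  exact: sqr_ge0.
have rP : r <= P by [].
have h2 : 0 <= S - 2 * r by lra.
have h3 : (S - 2 * r) * (a + b) ^+ 2 <= (S - 2 * r) * (2 * S).
  by apply: ler_wpM2l.
have e : a ^+ 4 + b ^+ 4 = S ^+ 2 - 2 * P ^+ 2 by rewrite /S /P; ring.
rewrite e.
have P0 : 0 <= P by rewrite mulr_ge0.
have h4 : 0 <= S ^+ 2 - 4 * P ^+ 2.
  have -> : S ^+ 2 - 4 * P ^+ 2 = (S - 2 * P) * (S + 2 * P) by ring.
  apply: mulr_ge0; lra.
have h5 : 0 <= r * (S - 2 * r) by apply: mulr_ge0.
have h6 : (S - 2 * r) * (2 * S) <= 4 * (S ^+ 2 - 2 * P ^+ 2 - 2 * r ^+ 2).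
  rewrite -subr_ge0.
  have -> : 4 * (S ^+ 2 - 2 * P ^+ 2 - 2 * r ^+ 2) - (S - 2 * r) * (2 * S)
    = 2 * (S ^+ 2 - 4 * P ^+ 2) + 4 * (r * (S - 2 * r)) by ring.
  by rewrite addr_ge0 // mulr_ge0.
exact: le_trans h3 h6.
Qed.

Lemma decomp x y : exists lam u v, absK lam = 1 /\ ip u v = 0 /\
  (forall z, absK (ip u z) ^+ 2 - absK (ip v z) ^+ 2
             = absK (ip x z) ^+ 2 - absK (ip y z) ^+ 2) /\
  hn (x - lam *: y) * (hn x + hn y) <= 2 * (hn u + hn v) ^+ 2.
Proof.
have [w [w1 e1]] := phase x y.
set r := absK (ip x y) in e1; set y1 := w *: y.
have {}e1 : ip x y1 = ofR r := e1.
have hy1 : hn y1 = hn y by rewrite /y1 hnZ w1 mul1r.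
set a := hn x; set b := hn y.
have a0 : 0 <= a := hn_ge0 _. have b0 : 0 <= b := hn_ge0 _.
have r0 : 0 <= r := abs_ge0 _.
have rab : r <= a * b := CS x y.
have e2 : ip y1 x = ofR r by rewrite ipC e1 conjR.
have e3 : ip y1 y1 = ofR (b ^+ 2) by rewrite ip_selfE hy1.
have e4 : ip x x = ofR (a ^+ 2) by rewrite ip_selfE.
have hd : hn (x - y1) ^+ 2 = a ^+ 2 + b ^+ 2 - 2 * r.
  have := expandR 1 e1; rewrite rmorph1 scale1r hy1 => ->; rewrite /a /b; ring.
have th z : absK (ip y1 z) = absK (ip y z) by rewrite /y1 ipZl absM w1 mul1r.
have [gap0|gapn] := eqVneq (a ^+ 2 + b ^+ 2 - 2 * r) 0.
  have xy : x = y1.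
    by apply/eqP; rewrite -subr_eq0; apply/eqP/hn_eq0/eqP; rewrite -sqrf_eq0 hd gap0.
  exists w, 0, 0; split => //; split; first exact: ip0l.
  split.
    by move=> z; rewrite ip0l abs0 subrr xy th subrr.
  rewrite -/y1 -xy subrr (_ : hn _ = 0); last exact: hn0.
  by rewrite mul0r mulr_ge0 ?sqr_ge0 // addr_ge0 ?hn_ge0.
have y1E : w *: y = y1 by [].
clearbody y1.
have gap : 0 < a ^+ 2 + b ^+ 2 - 2 * r.
  by rewrite lt_neqAle eq_sym gapn /= -hd sqr_ge0.
set S := a ^+ 2 + b ^+ 2.
have gapS : 0 < S - 2 * r := gap.
have S0 : 0 < S by lra.
set tau := 2 * r / S.
have tau0 : 0 <= tau by rewrite /tau; apply: divr_ge0; lra.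
have tau1 : tau < 1 by rewrite /tau ltr_pdivrMr // mul1r; lra.
set D := Num.sqrt (1 - tau ^+ 2).
have D2 : D ^+ 2 = 1 - tau ^+ 2 by rewrite sqr_sqrtr //; nra.
have D0 : 0 < D by rewrite sqrtr_gt0; nra.
set c := Num.sqrt ((1 + D) / (2 * D)).
have c2 : c ^+ 2 = (1 + D) / (2 * D) by rewrite sqr_sqrtr // divr_ge0 //; lra.
have c0 : 0 < c by rewrite sqrtr_gt0 divr_gt0 //; lra.
set s := - tau / (2 * D * c).
have cs : c * s = - tau / (2 * D) by rewrite /s; field; apply/andP; split; lra.
have s2 : s ^+ 2 = (1 - D) / (2 * D).
  have e : s ^+ 2 = tau ^+ 2 / (4 * D ^+ 2 * c ^+ 2).
    by rewrite /s; field; apply/andP; split; lra.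
  rewrite e c2; have -> : tau ^+ 2 = 1 - D ^+ 2 by lra.
  field; apply/andP; split; lra.
have AB : c ^+ 2 - s ^+ 2 = 1 by rewrite c2 s2; field; lra.
have XS : c * s * S + (c ^+ 2 + s ^+ 2) * r = 0.
  rewrite cs c2 s2 /tau; field; apply/andP; split; lra.
set u := ofR c *: x + ofR s *: y1.
set v := ofR s *: x + ofR c *: y1.
exists w, u, v; split => //.
have ipuv : ip u v = ofR (c * s * S + (c ^+ 2 + s ^+ 2) * r).
  rewrite /u /v !ipDl !ipDr !ipZl !ipZr !conjR e1 e2 e3 e4 -!rmorphM -!rmorphD.
  congr (ofR _); rewrite /S; ring.
split; first by rewrite ipuv XS rmorph0.
have hu2 : hn u ^+ 2 = c ^+ 2 * a ^+ 2 + 2 * (c * s) * r + s ^+ 2 * b ^+ 2.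
  apply: (fmorph_inj ofR); rewrite -ip_selfE /u !ipDl !ipDr !ipZl !ipZr !conjR.
  rewrite e1 e2 e3 e4 -!rmorphM -!rmorphD; congr (ofR _); ring.
have hv2 : hn v ^+ 2 = s ^+ 2 * a ^+ 2 + 2 * (c * s) * r + c ^+ 2 * b ^+ 2.
  apply: (fmorph_inj ofR); rewrite -ip_selfE /v !ipDl !ipDr !ipZl !ipZr !conjR.
  rewrite e1 e2 e3 e4 -!rmorphM -!rmorphD; congr (ofR _); ring.
split.
  move=> z; rewrite -(th z); apply: (fmorph_inj ofR).
  rewrite !rmorphB !absJmul /u /v !ipDl !ipZl !conjD !conjM !conjR.
  set al := ip x z; set be := ip y1 z.
  have -> : (ofR c * al + ofR s * be) * (ofR c * conj al + ofR s * conj be) -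
    (ofR s * al + ofR c * be) * (ofR s * conj al + ofR c * conj be) =
    ofR (c ^+ 2 - s ^+ 2) * (al * conj al - be * conj be).
    rewrite rmorphB !rmorphXn; ring.
  by rewrite AB rmorph1 mul1r.
have h4 : hn u ^+ 4 + hn v ^+ 4 = a ^+ 4 + b ^+ 4 - 2 * r ^+ 2.
  have -> : hn u ^+ 4 = (hn u ^+ 2) ^+ 2 by rewrite -exprM.
  have -> : hn v ^+ 4 = (hn v ^+ 2) ^+ 2 by rewrite -exprM.
  rewrite hu2 hv2.
  have XX : (c * s) ^+ 2 = c ^+ 2 * s ^+ 2 by rewrite exprMn.
  have XS' : c * s * S = - (c ^+ 2 + s ^+ 2) * r by lra.
  move: XX XS' AB; rewrite /S.
  set A := c ^+ 2; set B := s ^+ 2; set X := c * s => XX XS' AB'.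
  have eA : A = B + 1 by lra.
  have key : X ^+ 2 * (a ^+ 2 + b ^+ 2) ^+ 2 = (A + B) ^+ 2 * r ^+ 2.
    by rewrite -exprMn XS' exprMn sqrrN.
  rewrite XX in key.
  have e : (A * a ^+ 2 + 2 * X * r + B * b ^+ 2) ^+ 2 +
           (B * a ^+ 2 + 2 * X * r + A * b ^+ 2) ^+ 2 =
    (A ^+ 2 + B ^+ 2) * (a ^+ 4 + b ^+ 4) + 4 * A * B * a ^+ 2 * b ^+ 2
    + 4 * r * (A + B) * (X * (a ^+ 2 + b ^+ 2)) + 8 * X ^+ 2 * r ^+ 2 by ring.
  rewrite e mulrA XS' XX.
  move: key; rewrite eA => key.
  apply/eqP; rewrite -subr_eq0; apply/eqP.
  transitivity (2 * ((B + 1) * B * (a ^+ 2 + b ^+ 2) ^+ 2 - (B + 1 + B) ^+ 2 * r ^+ 2)).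
    ring.
  by rewrite key subrr mulr0.
have hu0 := hn_ge0 u; have hv0 := hn_ge0 v.
have hK := key_ineq a0 b0 r0 rab.
have L2 : (hn (x - w *: y) * (a + b)) ^+ 2 <= (2 * (hn u + hn v) ^+ 2) ^+ 2.
  rewrite exprMn y1E hd; apply: (le_trans hK); rewrite -h4.
  have -> : (2 * (hn u + hn v) ^+ 2) ^+ 2 = 4 * (hn u + hn v) ^+ 4.
    by rewrite exprMn -exprM; congr (_ * _); rewrite expr2 -natrM.
  rewrite ler_wpM2l // -subr_ge0.
  have -> : (hn u + hn v) ^+ 4 - (hn u ^+ 4 + hn v ^+ 4) =
    hn u * hn v * (4 * hn u ^+ 2 + 6 * hn u * hn v + 4 * hn v ^+ 2) by ring.
  by rewrite !mulr_ge0 ?addr_ge0 ?mulr_ge0 ?sqr_ge0.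
rewrite -(@ler_pXn2r _ 2) // nnegrE ?mulr_ge0 ?hn_ge0 ?addr_ge0 ?sqr_ge0 //.
Qed.

Section Frame.
Variables (d : measure_display) (T : measurableType d)
  (mu : {measure set T -> \bar R}) (xt : T -> 'rV[K]_n).
Local Notation Th := (absTheta conj absK xt).
Hypothesis mTh : forall x, measurable_fun setT (Th x).
Variable B : R.
Hypothesis B0 : 0 < B.
Hypothesis upper : forall x,
  (\int[mu]_t ((Th x t) ^+ 2)%:E <= (B * hn x ^+ 2)%:E)%E.

Lemma Th_ge0 x t : 0 <= Th x t.
Proof. exact: abs_ge0. Qed.

Lemma ThZ k x t : Th (ofR k *: x) t = `|k| * Th x t.
Proof. by rewrite /absTheta ipZl absM absR. Qed.

Lemma mTh2 x : measurable_fun setT (fun t => Th x t ^+ 2).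
Proof. exact: measurable_funX. Qed.

Lemma amgm (Z W e : R) : 0 < e -> Z * W <= Z ^+ 2 / (2 * e) + e * W ^+ 2 / 2.
Proof.
move=> e0; rewrite -subr_ge0.
have -> : Z ^+ 2 / (2 * e) + e * W ^+ 2 / 2 - Z * W = (Z - e * W) ^+ 2 / (2 * e).
  by field; rewrite gt_eqF.
by rewrite divr_ge0 ?sqr_ge0 // mulr_ge0 // ltW.
Qed.

Lemma pt_bound e u u' t : 0 < e ->
  `|Th u t ^+ 2 - Th u' t ^+ 2| <=
    e^-1 * Th (u - u') t ^+ 2 + e * (Th u t ^+ 2 + Th u' t ^+ 2).
Proof.
move=> e0.
have hZ : `|Th u t - Th u' t| <= Th (u - u') t.
  rewrite /absTheta ipBl ler_norml; apply/andP; split.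
    have := absD (ip u' (xt t) - ip u (xt t)) (ip u (xt t)).
    by rewrite subrK absB; lra.
  have := absD (ip u (xt t) - ip u' (xt t)) (ip u' (xt t)).
  by rewrite subrK; lra.
set X := Th u t in hZ *; set Y := Th u' t in hZ *; set Z := Th (u - u') t in hZ *.
have X0 : 0 <= X := Th_ge0 _ _. have Y0 : 0 <= Y := Th_ge0 _ _.
have Z0 : 0 <= Z := Th_ge0 _ _.
have -> : X ^+ 2 - Y ^+ 2 = (X - Y) * (X + Y) by ring.
rewrite normrM (ger0_norm (addr_ge0 X0 Y0)).
have h1 : `|X - Y| * (X + Y) <= Z * (X + Y) by apply: ler_wpM2r => //; rewrite addr_ge0.
have h2 := amgm Z (X + Y) e0.
have q1 : Z ^+ 2 / (2 * e) = (e^-1 * Z ^+ 2) / 2 by field; rewrite gt_eqF.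
have q2 : e * (X + Y) ^+ 2 / 2 <= e * (X ^+ 2 + Y ^+ 2).
  have : (X + Y) ^+ 2 / 2 <= X ^+ 2 + Y ^+ 2.
    rewrite ler_pdivrMr //; have := sqr_ge0 (X - Y).
    have -> : (X - Y) ^+ 2 = 2 * (X ^+ 2 + Y ^+ 2) - (X + Y) ^+ 2 - 2 * X * Y - 2 * X * Y + 2 * X * Y * 2 by ring.
    move=> _; rewrite -subr_ge0.
    have -> : (X ^+ 2 + Y ^+ 2) * 2 - (X + Y) ^+ 2 = (X - Y) ^+ 2 by ring.
    exact: sqr_ge0.
  move=> h; rewrite -mulrA; apply: ler_wpM2l => //; exact: ltW.
have q3 : 0 <= e^-1 * Z ^+ 2 by rewrite mulr_ge0 ?sqr_ge0 // invr_ge0 ltW.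
lra.
Qed.

Definition comb (s : seq (R * 'rV[K]_n)) t := \sum_(p <- s) p.1 * Th p.2 t ^+ 2.

Lemma comb_ge0 s t : all (fun p => 0 <= p.1) s -> 0 <= comb s t.
Proof.
elim: s => [|p s IH] /=; first by rewrite /comb big_nil.
move=> /andP[p0 hs]; rewrite /comb big_cons; apply: addr_ge0.
  by rewrite mulr_ge0 ?sqr_ge0.
exact: (IH hs).
Qed.

Lemma comb_meas s : measurable_fun setT (comb s).
Proof.
elim: s => [|p s IH].
  by rewrite /comb; under eq_fun do rewrite big_nil; exact: measurable_cst.
rewrite /comb; under eq_fun do rewrite big_cons.
apply: measurable_funD => //; apply: measurable_funM; first exact: measurable_cst.
exact: mTh2.
Qed.

Lemma int_comb (s : seq (R * 'rV[K]_n)) : all (fun p => 0 <= p.1) s ->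
  (\int[mu]_t (comb s t)%:E <= (B * \sum_(p <- s) p.1 * hn p.2 ^+ 2)%:E)%E.
Proof.
elim: s => [|p s IH] /=.
  rewrite big_nil mulr0 /comb; under eq_integral do rewrite big_nil.
  by rewrite integral0.
move=> /andP[p0 hs]; rewrite big_cons /comb.
under eq_integral do rewrite big_cons EFinD.
rewrite ge0_integralD //; first last.
- by apply/measurable_EFinP; exact: comb_meas.
- by move=> t _; rewrite lee_fin; apply: comb_ge0.
- by apply/measurable_EFinP; apply: measurable_funM => //; exact: mTh2.
- by move=> t _; rewrite lee_fin mulr_ge0 ?sqr_ge0.
rewrite mulrDr EFinD; apply: leeD; last exact: (IH hs).
under eq_integral do rewrite EFinM.
rewrite ge0_integralZl_EFin //; first last.
- by apply/measurable_EFinP; exact: mTh2.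
- by move=> t _; rewrite lee_fin sqr_ge0.
rewrite mulrCA EFinM; apply: lee_wpmul2l; first by rewrite lee_fin.
exact: upper.
Qed.

Definition Phi u v := (\int[mu]_t (`|Th u t ^+ 2 - Th v t ^+ 2|)%:E)%E.

Lemma Phi_meas u v : measurable_fun setT (fun t => `|Th u t ^+ 2 - Th v t ^+ 2|).
Proof.
apply: (measurableT_comp (@normr_measurable _ _)).
by apply: measurable_funB; exact: mTh2.
Qed.

Lemma Phi_ge0 u v : (0 <= Phi u v)%E.
Proof. by apply: integral_ge0 => t _; rewrite lee_fin. Qed.

Lemma Phi_le u v : (Phi u v <= (B * (hn u ^+ 2 + hn v ^+ 2))%:E)%E.
Proof.
have := @int_comb [:: (1, u); (1, v)].
have -> : all (fun p : R * 'rV[K]_n => 0 <= p.1) [:: (1, u); (1, v)] by rewrite /= ler01.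
move=> /(_ isT).
rewrite !big_cons big_nil !mul1r addr0 => h; apply: le_trans h.
apply: ge0_le_integral; first exact: measurableT.
- by move=> t _; rewrite lee_fin.
- by apply/measurable_EFinP; exact: Phi_meas.
- by apply/measurable_EFinP; exact: comb_meas.
move=> t _; rewrite lee_fin /comb !big_cons big_nil !mul1r addr0.
have := Th_ge0 u t; have := Th_ge0 v t => h1 h2.
rewrite ler_norml; apply/andP; split; rewrite ?lerBlDl; nra.
Qed.

Definition Phir u v := fine (Phi u v).

Lemma PhiE u v : Phi u v = (Phir u v)%:E.
Proof.
rewrite /Phir fineK // ge0_fin_numE ?Phi_ge0 //.
exact: (le_lt_trans (Phi_le u v) (ltry _)).
Qed.

Lemma Phir_ge0 u v : 0 <= Phir u v.
Proof. by rewrite -lee_fin -PhiE Phi_ge0. Qed.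

Lemma Phir_bound e u v u' v' : 0 < e ->
  Phir u v <= Phir u' v' + (e^-1 * B * (hn (u - u') ^+ 2 + hn (v - v') ^+ 2)
     + e * B * (hn u ^+ 2 + hn u' ^+ 2 + hn v ^+ 2 + hn v' ^+ 2)).
Proof.
move=> e0.
set s := [:: (e^-1, u - u'); (e^-1, v - v'); (e, u); (e, u'); (e, v); (e, v')].
have s0 : all (fun p => 0 <= p.1) s.
  by rewrite /= invr_ge0 ltW.
have hs := int_comb s0.
have -> : e^-1 * B * (hn (u - u') ^+ 2 + hn (v - v') ^+ 2)
     + e * B * (hn u ^+ 2 + hn u' ^+ 2 + hn v ^+ 2 + hn v' ^+ 2) =
   B * \sum_(p <- s) p.1 * hn p.2 ^+ 2.
  by rewrite /s !big_cons big_nil /=; ring.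
rewrite -lee_fin EFinD -!PhiE; apply: le_trans (leeD (lexx _) hs).
rewrite /Phi.
have <- : (\int[mu]_t ((`|Th u' t ^+ 2 - Th v' t ^+ 2|)%:E + (comb s t)%:E) =
  \int[mu]_t (`|Th u' t ^+ 2 - Th v' t ^+ 2|)%:E + \int[mu]_t (comb s t)%:E)%E.
  apply: ge0_integralD; first exact: measurableT.
  - by move=> t _; rewrite lee_fin.
  - by apply/measurable_EFinP; exact: Phi_meas.
  - by move=> t _; rewrite lee_fin; apply: comb_ge0.
  - by apply/measurable_EFinP; exact: comb_meas.
apply: ge0_le_integral; first exact: measurableT.
- by move=> t _; rewrite lee_fin.
- by apply/measurable_EFinP; exact: Phi_meas.
- apply/measurable_EFinP; apply: measurable_funD; first exact: Phi_meas.
  exact: comb_meas.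
move=> t _; rewrite lee_fin /comb /s !big_cons big_nil addr0 /=.
have hu := pt_bound u u' t e0; have hv := pt_bound v v' t e0.
have tri : `|Th u t ^+ 2 - Th v t ^+ 2| <= `|Th u' t ^+ 2 - Th v' t ^+ 2| +
   `|Th u t ^+ 2 - Th u' t ^+ 2| + `|Th v t ^+ 2 - Th v' t ^+ 2|.
  have -> : Th u t ^+ 2 - Th v t ^+ 2 = (Th u' t ^+ 2 - Th v' t ^+ 2) +
     (Th u t ^+ 2 - Th u' t ^+ 2) - (Th v t ^+ 2 - Th v' t ^+ 2) by ring.
  apply: le_trans (ler_normB _ _) _; rewrite lerD2r; exact: ler_normD.
lra.
Qed.

Lemma PhirZ k u v : Phir (ofR k *: u) (ofR k *: v) = k ^+ 2 * Phir u v.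
Proof.
apply/eqP; rewrite -eqe -PhiE EFinM -PhiE; apply/eqP.
rewrite /Phi -ge0_integralZl_EFin; first last.
- exact: sqr_ge0.
- by apply/measurable_EFinP; exact: Phi_meas.
- by move=> t _; rewrite lee_fin.
- exact: measurableT.
apply: eq_integral => t _; rewrite !ThZ -EFinM; congr (_%:E).
by rewrite !exprMn -mulrBr normrM ger0_norm ?sqr_ge0 // real_normK // num_real.
Qed.

Lemma Phi0_ae u v : Phir u v = 0 -> {ae mu, forall t, Th u t = Th v t}.
Proof.
move=> h0.
have h : (\int[mu]_(t in setT) `|(`|Th u t ^+ 2 - Th v t ^+ 2|)%:E| = 0)%E.
  rewrite -[RHS]/(0%:E) -h0 -PhiE; apply: eq_integral => t _.
  by rewrite gee0_abs // lee_fin.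
have := (ae_eq_integral_abs mu measurableT _).1 h.
move=> /(_ ((measurable_EFinP _ _).2 (Phi_meas u v))).
apply: filterS => t /(_ I) /= /eqP; rewrite eqe normr_eq0 subr_eq0.
rewrite eqrXn2 ?Th_ge0 // => /eqP //.
Qed.


Lemma abs_lip a b : `|absK a - absK b| <= absK (a - b).
Proof.
rewrite ler_norml; apply/andP; split.
  have := absD (b - a) a; rewrite subrK absB; lra.
have := absD (a - b) b; rewrite subrK; lra.
Qed.

Section Emb.
Variables (m : nat) (e1 e2 : 'rV[R]_m -> 'rV[K]_n) (L : R).
Hypothesis L0 : 0 <= L.
Hypothesis e1B : forall w w', e1 (w - w') = e1 w - e1 w'.
Hypothesis e2B : forall w w', e2 (w - w') = e2 w - e2 w'.
Hypothesis e1L : forall w, hn (e1 w) <= L * `|w|.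
Hypothesis e2L : forall w, hn (e2 w) <= L * `|w|.
Hypothesis esurj : forall u v, exists w, e1 w = u /\ e2 w = v /\ `|w| <= hn u + hn v.

Definition fobj w := Phir (e1 w) (e2 w) +
  (absK (ip (e1 w) (e2 w)) + `|hn (e1 w) + hn (e2 w) - 1|).

Lemma fobj_cont : continuous fobj.
Proof.
apply: loclip_cont => w.
set u := e1 w; set v := e2 w; set a := hn u; set b := hn v.
exists ((2 * B * L ^+ 2 + B * (a ^+ 2 + (a + L) ^+ 2 + b ^+ 2 + (b + L) ^+ 2))
  + L * (a + b + L) + 2 * L).
move=> w' hd; set dd := `|w' - w| in hd *.
have d0 : 0 <= dd := normr_ge0 _.
set u' := e1 w'; set v' := e2 w'.
have a0 : 0 <= a := hn_ge0 _. have b0 : 0 <= b := hn_ge0 _.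
have hud : hn (u' - u) <= L * dd by rewrite /u' /u -e1B; exact: e1L.
have hvd : hn (v' - v) <= L * dd by rewrite /v' /v -e2B; exact: e2L.
have hud0 : 0 <= hn (u' - u) := hn_ge0 _. have hvd0 : 0 <= hn (v' - v) := hn_ge0 _.
have hu' : hn u' <= a + L * dd.
  have := hnD (u' - u) u; rewrite subrK -/a; lra.
have hv' : hn v' <= b + L * dd.
  have := hnD (v' - v) v; rewrite subrK -/b; lra.
have hu'0 : 0 <= hn u' := hn_ge0 _. have hv'0 : 0 <= hn v' := hn_ge0 _.
have Ld : L * dd <= L by rewrite ler_piMr.
have P3 : `| `|hn u' + hn v' - 1| - `|a + b - 1| | <= 2 * L * dd.
  apply: le_trans (ler_dist_dist _ _) _.
  have := hn_lip u' u; have := hn_lip v' v; rewrite -/a -/b => h1 h2.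
  have h3 : `|hn u' + hn v' - 1 - (a + b - 1)| <= `|hn u' - a| + `|hn v' - b|.
    have -> : hn u' + hn v' - 1 - (a + b - 1) = (hn u' - a) + (hn v' - b) by ring.
    exact: ler_normD.
  lra.
have P2 : `|absK (ip u' v') - absK (ip u v)| <= L * (a + b + L) * dd.
  apply: le_trans (abs_lip _ _) _.
  have -> : ip u' v' - ip u v = ip (u' - u) v' + ip u (v' - v).
    by rewrite ipBl ipBr; ring.
  apply: le_trans (absD _ _) _.
  have c1 := CS (u' - u) v'; have c2 := CS u (v' - v).
  rewrite -/a in c2.
  have c3 : hn (u' - u) * hn v' <= (L * dd) * (b + L).
    apply: ler_pM => //; lra.
  have c4 : a * hn (v' - v) <= a * (L * dd) by apply: ler_wpM2l.
  have -> : L * (a + b + L) * dd = L * dd * (b + L) + a * (L * dd) by ring.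
  lra.
have P1 : `|Phir u' v' - Phir u v| <=
    (2 * B * L ^+ 2 + B * (a ^+ 2 + (a + L) ^+ 2 + b ^+ 2 + (b + L) ^+ 2)) * dd.
  have [dz|dpos] := eqVneq dd 0.
    have ww : w' = w by apply/eqP; rewrite -subr_eq0 -normr_eq0 -/dd dz.
    by rewrite /u' /v' ww subrr normr0 dz mulr0.
  have dp : 0 < dd by rewrite lt_neqAle eq_sym dpos d0.
  have q1 := Phir_bound u' v' u v dp.
  have q2 := Phir_bound u v u' v' dp.
  rewrite -/a -/b in q1 q2.
  rewrite (hnB u u') (hnB v v') in q2.
  have t1 : dd^-1 * B * (hn (u' - u) ^+ 2 + hn (v' - v) ^+ 2) <= 2 * B * L ^+ 2 * dd.
    have s1 : hn (u' - u) ^+ 2 <= (L * dd) ^+ 2 by rewrite ler_pXn2r // nnegrE mulr_ge0.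
    have s2 : hn (v' - v) ^+ 2 <= (L * dd) ^+ 2 by rewrite ler_pXn2r // nnegrE mulr_ge0.
    have -> : 2 * B * L ^+ 2 * dd = dd^-1 * B * ((L * dd) ^+ 2 + (L * dd) ^+ 2).
      by field; rewrite gt_eqF.
    apply: ler_wpM2l; first by rewrite mulr_ge0 ?invr_ge0 ?ltW.
    exact: lerD.
  have t2 : dd * B * (hn u' ^+ 2 + a ^+ 2 + hn v' ^+ 2 + b ^+ 2) <=
     dd * B * (a ^+ 2 + (a + L) ^+ 2 + b ^+ 2 + (b + L) ^+ 2).
    apply: ler_wpM2l; first by rewrite mulr_ge0 ?ltW.
    have s1 : hn u' ^+ 2 <= (a + L) ^+ 2.
      by rewrite ler_pXn2r ?nnegrE ?addr_ge0 //; lra.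
    have s2 : hn v' ^+ 2 <= (b + L) ^+ 2.
      by rewrite ler_pXn2r ?nnegrE ?addr_ge0 //; lra.
    lra.
  have t3 : dd * B * (a ^+ 2 + hn u' ^+ 2 + b ^+ 2 + hn v' ^+ 2) =
            dd * B * (hn u' ^+ 2 + a ^+ 2 + hn v' ^+ 2 + b ^+ 2) by ring.
  rewrite ler_norml; apply/andP; split.
  - move: q2; rewrite t3.
    set X := dd * B * (a ^+ 2 + (a + L) ^+ 2 + b ^+ 2 + (b + L) ^+ 2) in t2.
    have -> : (2 * B * L ^+ 2 + B * (a ^+ 2 + (a + L) ^+ 2 + b ^+ 2 + (b + L) ^+ 2)) * dd
       = 2 * B * L ^+ 2 * dd + X by rewrite /X; ring.
    lra.
  - set X := dd * B * (a ^+ 2 + (a + L) ^+ 2 + b ^+ 2 + (b + L) ^+ 2) in t2.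
    have -> : (2 * B * L ^+ 2 + B * (a ^+ 2 + (a + L) ^+ 2 + b ^+ 2 + (b + L) ^+ 2)) * dd
       = 2 * B * L ^+ 2 * dd + X by rewrite /X; ring.
    lra.
rewrite /fobj -/u -/v -/u' -/v' -/a -/b.
set K1 := 2 * B * L ^+ 2 + B * (a ^+ 2 + (a + L) ^+ 2 + b ^+ 2 + (b + L) ^+ 2) in P1 *.
have -> : (K1 + L * (a + b + L) + 2 * L) * dd = K1 * dd + L * (a + b + L) * dd + 2 * L * dd
  by ring.
set p1 := Phir u' v' - Phir u v in P1.
have -> : Phir u' v' + (absK (ip u' v') + `|hn u' + hn v' - 1|) -
    (Phir u v + (absK (ip u v) + `|a + b - 1|)) =
  p1 + (absK (ip u' v') - absK (ip u v)) + (`|hn u' + hn v' - 1| - `|a + b - 1|).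
  by rewrite /p1; ring.
apply: le_trans (ler_normD _ _) _; apply: lerD => //.
apply: le_trans (ler_normD _ _) _; exact: lerD.
Qed.

Hypothesis PR : does_phase_retrieval conj absK mu xt.

Lemma fobj_pos w : 0 < fobj w.
Proof.
rewrite /fobj; set u := e1 w; set v := e2 w.
have h1 := Phir_ge0 u v; have h2 := abs_ge0 (ip u v).
have h3 := normr_ge0 (hn u + hn v - 1).
rewrite lt_neqAle eq_sym; apply/andP; split; last by rewrite !addr_ge0.
apply/eqP => h.
have ph : Phir u v = 0 by lra.
have ip0 : ip u v = 0 by apply: abs_eq0; lra.
have n1 : `|hn u + hn v - 1| = 0 by lra.
have [lam [hl ul]] := PR (Phi0_ae ph).
have hv : hn v = 0.
  move: ip0; rewrite ul ipZl ip_selfE => /(congr1 absK).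
  rewrite absM hl mul1r absR abs0 => /normr0_eq0 /eqP; rewrite sqrf_eq0 => /eqP //.
have v0 : v = 0 := hn_eq0 hv.
have hu : hn u = 0.
  rewrite ul v0 scaler0; exact: hn0.
by move: n1; rewrite hu hv add0r sub0r normrN normr1 => /eqP; rewrite oner_eq0.
Qed.

Lemma PR_lower : exists2 mm, 0 < mm &
  forall u v, ip u v = 0 -> mm * (hn u + hn v) ^+ 2 <= Phir u v.
Proof.
have [c c1 hc] := min_ball fobj_cont.
exists (fobj c); first exact: fobj_pos.
move=> u v uv.
set rho := hn u + hn v.
have rho0 : 0 <= rho by rewrite addr_ge0 ?hn_ge0.
have [rz|rnz] := eqVneq rho 0.
  by rewrite rz expr0n /= mulr0 Phir_ge0.
have rp : 0 < rho by rewrite lt_neqAle eq_sym rnz.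
set u' := ofR rho^-1 *: u; set v' := ofR rho^-1 *: v.
have hu' : hn u' = rho^-1 * hn u by rewrite /u' hnZ absR ger0_norm // invr_ge0.
have hv' : hn v' = rho^-1 * hn v by rewrite /v' hnZ absR ger0_norm // invr_ge0.
have s1 : hn u' + hn v' = 1 by rewrite hu' hv' -mulrDr mulVf.
have ip' : ip u' v' = 0 by rewrite /u' /v' ipZl ipZr uv !mulr0.
have [w [ew1 [ew2 hw]]] := esurj u' v'.
have hw1 : `|w| <= 1 by rewrite -s1.
have := hc w hw1.
rewrite /fobj ew1 ew2 ip' abs0 s1 subrr normr0 !addr0 /u' /v' PhirZ.
move=> h.
have : fobj c * rho ^+ 2 <= rho ^-1 ^+ 2 * Phir u v * rho ^+ 2.
  by apply: ler_wpM2r => //; rewrite sqr_ge0.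
have -> : rho ^-1 ^+ 2 * Phir u v * rho ^+ 2 = Phir u v.
  by field; rewrite gt_eqF.
by [].
Qed.


Lemma Lnorm2E (g : T -> R) :
  ((Lnorm mu 2%:E (fun t => (g t)%:E)) `^ 2 = \int[mu]_t ((g t) ^+ 2)%:E)%E.
Proof.
rewrite poweR_Lnorm ?pnatr_eq0 //; apply: eq_integral => t _.
by rewrite abse_EFin poweR_EFin powR_mulrn // real_normK // num_real.
Qed.

Lemma Phir_xy_bound x y (eps Dv : R) : 0 < eps ->
  (\int[mu]_t ((Th x t - Th y t) ^+ 2)%:E = (Dv ^+ 2)%:E)%E ->
  Phir x y <= Dv ^+ 2 / (2 * eps) + eps * B * (hn x ^+ 2 + hn y ^+ 2).
Proof.
move=> e0 hD.
set s := [:: (eps, x); (eps, y)].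
have s0 : all (fun p : R * 'rV[K]_n => 0 <= p.1) s by rewrite /= ltW.
have hs := int_comb s0.
have -> : Dv ^+ 2 / (2 * eps) + eps * B * (hn x ^+ 2 + hn y ^+ 2) =
   (2 * eps)^-1 * Dv ^+ 2 + B * \sum_(p <- s) p.1 * hn p.2 ^+ 2.
  by rewrite /s !big_cons big_nil /=; field; rewrite gt_eqF.
rewrite -lee_fin -PhiE EFinD EFinM -hD.
set c := (2 * eps)^-1.
have c0 : 0 <= c by rewrite invr_ge0 mulr_ge0 // ltW.
have mD : measurable_fun setT (fun t => Th x t - Th y t) by apply: measurable_funB.
have mD2 : measurable_fun setT (fun t => (Th x t - Th y t) ^+ 2) := measurable_funX 2 mD.
have <- : (\int[mu]_t (c%:E * ((Th x t - Th y t) ^+ 2)%:E) =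
   c%:E * \int[mu]_t ((Th x t - Th y t) ^+ 2)%:E)%E.
  apply: ge0_integralZl_EFin; first exact: measurableT.
  - by move=> t _; rewrite lee_fin sqr_ge0.
  - by apply/measurable_EFinP.
  - exact: c0.
apply: le_trans (leeD (lexx _) hs).
have mc : measurable_fun setT (fun t => c * (Th x t - Th y t) ^+ 2).
  by apply: measurable_funM; [exact: measurable_cst | exact: mD2].
have <- : (\int[mu]_t (c%:E * ((Th x t - Th y t) ^+ 2)%:E + (comb s t)%:E) =
  \int[mu]_t (c%:E * ((Th x t - Th y t) ^+ 2)%:E) + \int[mu]_t (comb s t)%:E)%E.
  apply: ge0_integralD; first exact: measurableT.
  - by move=> t _; rewrite -EFinM lee_fin mulr_ge0 ?sqr_ge0.
  - have -> : (fun t => c%:E * ((Th x t - Th y t) ^+ 2)%:E)%E =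
        (fun t => (c * (Th x t - Th y t) ^+ 2)%:E) by apply: funext => t; rewrite EFinM.
    by apply/measurable_EFinP.
  - by move=> t _; rewrite lee_fin; apply: comb_ge0.
  - by apply/measurable_EFinP; exact: comb_meas.
rewrite /Phi; apply: ge0_le_integral; first exact: measurableT.
- by move=> t _; rewrite lee_fin.
- by apply/measurable_EFinP; exact: Phi_meas.
- have -> : (fun t => c%:E * ((Th x t - Th y t) ^+ 2)%:E + (comb s t)%:E)%E =
        (fun t => (c * (Th x t - Th y t) ^+ 2 + comb s t)%:E).
    by apply: funext => t; rewrite EFinD EFinM.
  apply/measurable_EFinP; apply: measurable_funD => //; exact: comb_meas.
move=> t _; rewrite -EFinM -EFinD lee_fin /comb /s !big_cons big_nil addr0 /=.
set X := Th x t; set Y := Th y t.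
have X0 : 0 <= X := Th_ge0 _ _. have Y0 : 0 <= Y := Th_ge0 _ _.
have -> : X ^+ 2 - Y ^+ 2 = (X - Y) * (X + Y) by ring.
rewrite normrM (ger0_norm (addr_ge0 X0 Y0)).
have h2 := amgm `|X - Y| (X + Y) e0.
rewrite real_normK ?num_real // in h2.
have q1 : (X - Y) ^+ 2 / (2 * eps) = c * (X - Y) ^+ 2 by rewrite mulrC.
have q2 : eps * (X + Y) ^+ 2 / 2 <= eps * X ^+ 2 + eps * Y ^+ 2.
  rewrite -mulrDr -mulrA; apply: ler_wpM2l; first exact: ltW.
  rewrite ler_pdivrMr // -subr_ge0.
  have -> : (X ^+ 2 + Y ^+ 2) * 2 - (X + Y) ^+ 2 = (X - Y) ^+ 2 by ring.
  exact: sqr_ge0.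
lra.
Qed.

Lemma stable_PR C : 0 < C -> does_stable_phase_retrieval conj absK mu C xt ->
  does_phase_retrieval conj absK mu xt.
Proof.
move=> C0 hs x y hae.
have [lam [hl h]] := hs x y.
exists lam; split => //.
have mD : measurable_fun setT (fun t => Th x t - Th y t) by apply: measurable_funB.
have N0 : Lnorm mu 2%:E (fun t => (Th x t - Th y t)%:E) = 0%E.
  apply: (@poweR_eq0_eq0 _ _ 2); first exact: Lnorm_ge0.
  rewrite Lnorm2E.
  rewrite (ae_eq_integral (cst 0%E)); first exact: integral0.
  - exact: measurableT.
  - by apply/measurable_EFinP; exact: measurable_funX.
  - exact: measurable_cst.
  - by apply: filterS hae => t /= ->; rewrite subrr expr0n.
move: h; rewrite /Defs.does_stable_phase_retrieval N0 mule0 lee_fin => h.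
have h0 : hn (x - lam *: y) = 0 by apply/eqP; rewrite eq_le h hn_ge0.
by apply/eqP; rewrite -subr_eq0; apply/eqP; exact: hn_eq0.
Qed.

Lemma PR_stable : exists C, 0 < C /\ does_stable_phase_retrieval conj absK mu C xt.
Proof.
have [mm mm0 hm] := PR_lower.
set sB := Num.sqrt B.
have sB0 : 0 < sB by rewrite sqrtr_gt0.
have sB2 : sB ^+ 2 = B by rewrite sqr_sqrtr // ltW.
exists (3 * sB / mm); split; first by rewrite divr_gt0 // mulr_gt0.
move=> x y.
set N := Lnorm mu 2%:E (fun t => (Th x t - Th y t)%:E).
have N0 : (0 <= N)%E by exact: Lnorm_ge0.
have C0 : 0 < 3 * sB / mm by rewrite divr_gt0 // mulr_gt0.
have abs1 : absK 1 = 1 by rewrite -(rmorph1 ofR) absR normr1.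
have [Ninf|Nfin] := eqVneq N +oo%E.
  exists 1; split => //; rewrite Ninf gt0_muley ?lte_fin //; exact: leey.
have eN : N = (fine N)%:E by rewrite fineK // ge0_fin_numE // ltey.
set Dv := fine N in eN.
have Dv0 : 0 <= Dv by rewrite -lee_fin -eN.
have mD : measurable_fun setT (fun t => Th x t - Th y t) by apply: measurable_funB.
have hD : (\int[mu]_t ((Th x t - Th y t) ^+ 2)%:E = (Dv ^+ 2)%:E)%E.
  by rewrite -Lnorm2E -/N eN poweR_EFin powR_mulrn.
have [Dz|Dnz] := eqVneq Dv 0.
  have : N = 0%E by rewrite eN Dz.
  have h2 : (0 < (2:R)%:E)%E by rewrite lte_fin.
  move/Lnorm_eq0_eq0 => /(_ ((measurable_EFinP _ _).2 mD) h2) hae.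
  have hae' : {ae mu, forall t, Th x t = Th y t}.
    by apply: filterS hae => t /(_ I) /= /eqP; rewrite eqe subr_eq0 => /eqP.
  have [lam [hl xl]] := PR hae'.
  exists lam; split => //.
  rewrite xl subrr (_ : hn _ = 0); last exact: hn0.
  by rewrite mule_ge0 // lee_fin ltW.
have Dp : 0 < Dv by rewrite lt_neqAle eq_sym Dnz.
have [lam [u [v [hl [uv [hth hineq]]]]]] := decomp x y.
exists lam; split => //.
rewrite eN -EFinM lee_fin.
have PE : Phir u v = Phir x y.
  rewrite /Phir /Phi; congr fine; apply: eq_integral => t _.
  by rewrite /absTheta hth.
have hmu := hm _ _ uv; rewrite PE in hmu.
set S := hn x + hn y in hineq.
have hx0 := hn_ge0 x; have hy0 := hn_ge0 y.
have [Sz|Snz] := eqVneq S 0.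
  have x0 : hn x = 0 by move: Sz; rewrite /S; lra.
  have y0 : hn y = 0 by move: Sz; rewrite /S; lra.
  rewrite (hn_eq0 x0) (hn_eq0 y0) scaler0 subrr (_ : hn _ = 0); last exact: hn0.
  by rewrite mulr_ge0 // ltW.
have Sp : 0 < S by rewrite lt_neqAle eq_sym Snz /S addr_ge0.
set eps := Dv / (S * sB).
have ep : 0 < eps by rewrite divr_gt0 // mulr_gt0.
have bnd := Phir_xy_bound ep hD.
have e1' : Dv ^+ 2 / (2 * eps) = Dv * S * sB / 2.
  by rewrite /eps; field; rewrite !gt_eqF.
have Q : hn x ^+ 2 + hn y ^+ 2 <= S ^+ 2.
  by rewrite /S sqrrD; nra.
have e2' : eps * B * (hn x ^+ 2 + hn y ^+ 2) <= Dv * S * sB.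
  have -> : Dv * S * sB = eps * B * S ^+ 2.
    by rewrite /eps -sB2; field; rewrite !gt_eqF.
  by apply: ler_wpM2l => //; rewrite mulr_ge0 // ltW.
set P := (hn u + hn v) ^+ 2 in hineq hmu.
set H := hn (x - lam *: y) in hineq *.
have H0 : 0 <= H := hn_ge0 _.
have k1 : mm * P <= 3 / 2 * (Dv * S * sB) by lra.
have k2 : mm * (H * S) <= 3 * (Dv * S * sB).
  have : mm * (H * S) <= mm * (2 * P) by apply: ler_wpM2l => //; exact: ltW.
  have -> : mm * (2 * P) = 2 * (mm * P) by ring.
  lra.
rewrite -(ler_pM2r Sp) -(ler_pM2l mm0).
have -> : mm * (3 * sB / mm * Dv * S) = 3 * (Dv * S * sB) by field; rewrite gt_eqF.
by [].
Qed.
End Emb. End Frame.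

Lemma abs_le_hn x i : absK (x ord0 i) <= hn x.
Proof.
have h : absK (x ord0 i) ^+ 2 <= hn x ^+ 2.
  rewrite hn2 (bigD1 i) //= lerDl; apply: sumr_ge0 => j _; exact: sqr_ge0.
by rewrite -(@ler_pXn2r _ 2) // nnegrE ?hn_ge0.
Qed.

Lemma hn_le_sum x : hn x <= \sum_i absK (x ord0 i).
Proof.
have s0 : 0 <= \sum_i absK (x ord0 i) by apply: sumr_ge0 => i _.
have h : hn x ^+ 2 <= (\sum_i absK (x ord0 i)) ^+ 2.
  rewrite hn2 [X in _ <= X]expr2 mulr_suml; apply: ler_sum => i _.
  rewrite expr2; apply: ler_wpM2l => //.
  by rewrite (bigD1 i) //= lerDl; apply: sumr_ge0 => j _.
by rewrite -(@ler_pXn2r _ 2) // nnegrE ?hn_ge0.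
Qed.

Lemma hn_le_bound x M : (forall i, absK (x ord0 i) <= M) -> hn x <= n%:R * M.
Proof.
move=> h; apply: (le_trans (hn_le_sum x)).
have -> : n%:R * M = \sum_(i < n) M by rewrite sumr_const card_ord mulr_natl.
by apply: ler_sum => i _.
Qed.

Lemma cor_gen (m : nat) (e1 e2 : 'rV[R]_m -> 'rV[K]_n) (L : R) :
  0 <= L ->
  (forall w w', e1 (w - w') = e1 w - e1 w') ->
  (forall w w', e2 (w - w') = e2 w - e2 w') ->
  (forall w, hn (e1 w) <= L * `|w|) ->
  (forall w, hn (e2 w) <= L * `|w|) ->
  (forall u v, exists w, e1 w = u /\ e2 w = v /\ `|w| <= hn u + hn v) ->
  forall (d : measure_display) (T : measurableType d)
    (mu : {measure set T -> \bar R}) (xt : T -> 'rV[K]_n),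
    is_continuous_frame conj absK mu xt ->
    (does_phase_retrieval conj absK mu xt <->
     exists C : R, 0 < C /\ does_stable_phase_retrieval conj absK mu C xt).
Proof.
move=> L0 e1B e2B e1L e2L esurj d T mu xt [mTh [A [B [A0 [AB hb]]]]].
have B0 : 0 < B := lt_le_trans A0 AB.
have upper x := (hb x).2.
split.
  move=> PR; exact: (PR_stable mTh B0 upper L0 e1B e2B e1L e2L esurj PR).
by move=> [C [C0 hs]]; exact: (stable_PR mTh C0 hs).
Qed.
End Alg.

Lemma mx_entry_le (R : realType) m (w : 'rV[R]_m) i j : `|w i j| <= `|w|.
Proof. rewrite [X in _ <= X]/Num.norm /= mx_normrE. exact: (le_bigmax _ _ (i, j)). Qed.

Lemma mx_norm_le (R : realType) m (w : 'rV[R]_m) c :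
  0 <= c -> (forall i j, `|w i j| <= c) -> `|w| <= c.
Proof. move=> c0 h. rewrite /Num.norm /= mx_normrE. apply: bigmax_le => // ij _; exact: h. Qed.

Lemma real_case (R : realType) :
  corollary2p3_for (K := R) (fun z => z) (fun z => `|z|).
Proof.
move=> d T mu n xt.
set cj := fun z : R => z; set ab := fun z : R => `|z|.
have conjD : forall a b : R, cj (a + b) = cj a + cj b by [].
have conjM : forall a b : R, cj (a * b) = cj a * cj b by [].
have conjK : forall a : R, cj (cj a) = a by [].
have conjR : forall r : R, cj (@idfun R r) = idfun r by [].
have mulJ : forall a : R, a * cj a = idfun (ab a ^+ 2).
  by move=> a; rewrite /cj /ab /= real_normK ?num_real // expr2.
have absM : forall a b : R, ab (a * b) = ab a * ab b by move=> a b; exact: normrM.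
have absD : forall a b : R, ab (a + b) <= ab a + ab b by move=> a b; exact: ler_normD.
have absR : forall r : R, ab (@idfun R r) = `|r| by [].
have abs_ge0 : forall a : R, 0 <= ab a by move=> a; exact: normr_ge0.
have abs_eq0 : forall a : R, ab a = 0 -> a = 0 by move=> a /normr0_eq0.
have absJ : forall a : R, ab (cj a) = ab a by [].
have L0 : 0 <= n%:R :> R by exact: ler0n.
have e1B : forall w w' : 'rV[R]_(n + n), lsubmx (w - w') = lsubmx w - lsubmx w'.
  by move=> w w'; rewrite linearB.
have e2B : forall w w' : 'rV[R]_(n + n), rsubmx (w - w') = rsubmx w - rsubmx w'.
  by move=> w w'; rewrite linearB.
have e1L : forall w : 'rV[R]_(n + n), hnorm cj ab (lsubmx w) <= n%:R * `|w|.
  move=> w; apply: (hn_le_bound mulJ absR abs_ge0) => i.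
  rewrite /ab mxE; exact: mx_entry_le.
have e2L : forall w : 'rV[R]_(n + n), hnorm cj ab (rsubmx w) <= n%:R * `|w|.
  move=> w; apply: (hn_le_bound mulJ absR abs_ge0) => i.
  rewrite /ab mxE; exact: mx_entry_le.
have esurj : forall u v : 'rV[R]_n, exists w : 'rV[R]_(n + n),
    lsubmx w = u /\ rsubmx w = v /\ `|w| <= hnorm cj ab u + hnorm cj ab v.
  move=> u v; exists (row_mx u v); rewrite row_mxKl row_mxKr; split=> //; split=> //.
  have hu0 : 0 <= hnorm cj ab u by exact: sqrtr_ge0.
  have hv0 : 0 <= hnorm cj ab v by exact: sqrtr_ge0.
  apply: mx_norm_le; first by rewrite addr_ge0.
  move=> i j; rewrite mxE; case: splitP => k _; rewrite ord1.
  + apply: le_trans (abs_le_hn mulJ absR abs_ge0 u k) _.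
    by rewrite lerDl.
  + apply: le_trans (abs_le_hn mulJ absR abs_ge0 v k) _.
    by rewrite lerDr.
exact: (cor_gen conjD conjM conjK conjR mulJ absM absD absR abs_ge0 abs_eq0 absJ
  L0 e1B e2B e1L e2L esurj).
Qed.

Definition cmk (R : realType) n (a b : 'rV[R]_n) : 'rV[R[i]]_n :=
  \row_i (Complex (a ord0 i) (b ord0 i)).

Lemma normc_le (R : realType) (a b : R) :
  ComplexField.Normc.normc (Complex a b) <= `|a| + `|b|.
Proof.
rewrite /ComplexField.Normc.normc /=.
rewrite -(@ler_pXn2r _ 2) // ?nnegrE ?sqrtr_ge0 ?addr_ge0 //.
rewrite sqr_sqrtr ?addr_ge0 ?sqr_ge0 //.
rewrite -[a ^+ 2]real_normK ?num_real // -[b ^+ 2]real_normK ?num_real // sqrrD.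
have := normr_ge0 a; have := normr_ge0 b; nra.
Qed.

Lemma Re_le (R : realType) (z : R[i]) : `|complex.Re z| <= ComplexField.Normc.normc z :> R.
Proof.
case: z => a b /=; rewrite /ComplexField.Normc.normc /=.
rewrite -sqrtr_sqr ler_sqrt ?addr_ge0 ?sqr_ge0 // lerDl sqr_ge0 //.
Qed.

Lemma Im_le (R : realType) (z : R[i]) : `|complex.Im z| <= ComplexField.Normc.normc z :> R.
Proof.
case: z => a b /=; rewrite /ComplexField.Normc.normc /=.
rewrite -sqrtr_sqr ler_sqrt ?addr_ge0 ?sqr_ge0 // lerDr sqr_ge0 //.
Qed.

Lemma complexE' (R : realType) (z : R[i]) : Complex (complex.Re z) (complex.Im z) = z.
Proof. by case: z. Qed.

Lemma complex_case (R : realType) :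
  corollary2p3_for (K := R[i]) (@conjc R) (@ComplexField.Normc.normc R).
Proof.
move=> d T mu n xt.
set cj := @conjc R; set ab := @ComplexField.Normc.normc R.
set ofR := real_complex R.
have conjD : forall a b : R[i], cj (a + b) = cj a + cj b by move=> a b; exact: raddfD.
have conjM : forall a b : R[i], cj (a * b) = cj a * cj b by move=> a b; exact: rmorphM.
have conjK : forall a : R[i], cj (cj a) = a by exact: conjcK.
have conjR : forall r : R, cj (ofR r) = ofR r by move=> r; exact: conjc_real.
have mulJ : forall a : R[i], a * cj a = ofR (ab a ^+ 2).
  case=> x y; rewrite /ab /ComplexField.Normc.normc /= sqr_sqrtr ?addr_ge0 ?sqr_ge0 //.
  apply/eqP; rewrite eq_complex /=; apply/andP; split; apply/eqP; ring.
have absM : forall a b : R[i], ab (a * b) = ab a * ab b.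
  by move=> a b; exact: ComplexField.Normc.normcM.
have absD : forall a b : R[i], ab (a + b) <= ab a + ab b.
  by move=> a b; exact: le_normcD.
have absR : forall r : R, ab (ofR r) = `|r|.
  by move=> r; rewrite /ab /ComplexField.Normc.normc /= expr0n /= addr0 sqrtr_sqr.
have abs_ge0 : forall a : R[i], 0 <= ab a by case=> x y; exact: sqrtr_ge0.
have abs_eq0 : forall a : R[i], ab a = 0 -> a = 0.
  by move=> a; exact: ComplexField.Normc.eq0_normc.
have absJ : forall a : R[i], ab (cj a) = ab a.
  by case=> x y; rewrite /ab /ComplexField.Normc.normc /= sqrrN.
have L0 : 0 <= n%:R * 2 :> R by rewrite mulr_ge0 ?ler0n.
have cmkB (a b a' b' : 'rV[R]_n) : cmk (a - a') (b - b') = cmk a b - cmk a' b'.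
  by apply/rowP => i; rewrite !mxE.
set e1 := fun w : 'rV[R]_((n + n) + (n + n)) => cmk (lsubmx (lsubmx w)) (rsubmx (lsubmx w)).
set e2 := fun w : 'rV[R]_((n + n) + (n + n)) => cmk (lsubmx (rsubmx w)) (rsubmx (rsubmx w)).
have e1B : forall w w', e1 (w - w') = e1 w - e1 w'.
  by move=> w w'; rewrite /e1 !linearB cmkB.
have e2B : forall w w', e2 (w - w') = e2 w - e2 w'.
  by move=> w w'; rewrite /e2 !linearB cmkB.
have cmkL (a b : 'rV[R]_n) (w : 'rV[R]_((n + n) + (n + n))) :
  (forall i, `|a ord0 i| <= `|w|) -> (forall i, `|b ord0 i| <= `|w|) ->
  hnorm cj ab (cmk a b) <= n%:R * 2 * `|w|.
  move=> ha hb; rewrite -mulrA; apply: (hn_le_bound mulJ absR abs_ge0) => i.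
  rewrite /ab mxE; apply: le_trans (normc_le _ _) _.
  by rewrite mulr2n mulrDl mul1r lerD.
have e1L : forall w, hnorm cj ab (e1 w) <= n%:R * 2 * `|w|.
  by move=> w; apply: cmkL => i; rewrite !mxE; exact: mx_entry_le.
have e2L : forall w, hnorm cj ab (e2 w) <= n%:R * 2 * `|w|.
  by move=> w; apply: cmkL => i; rewrite !mxE; exact: mx_entry_le.
have esurj : forall u v : 'rV[R[i]]_n, exists w,
    e1 w = u /\ e2 w = v /\ `|w| <= hnorm cj ab u + hnorm cj ab v.
  move=> u v.
  exists (row_mx (row_mx (\row_i complex.Re (u ord0 i)) (\row_i complex.Im (u ord0 i)))
                 (row_mx (\row_i complex.Re (v ord0 i)) (\row_i complex.Im (v ord0 i)))).
  rewrite /e1 /e2 !(row_mxKl, row_mxKr).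
  have hu0 : 0 <= hnorm cj ab u by exact: sqrtr_ge0.
  have hv0 : 0 <= hnorm cj ab v by exact: sqrtr_ge0.
  split.
    apply/rowP => i; rewrite !mxE (_ : (0 : 'I_1) = ord0); last by apply: val_inj.
    by case: (u ord0 i).
  split.
    apply/rowP => i; rewrite !mxE (_ : (0 : 'I_1) = ord0); last by apply: val_inj.
    by case: (v ord0 i).
  apply: mx_norm_le; first by rewrite addr_ge0.
  move=> i j; rewrite mxE; case: splitP => k _; rewrite mxE; case: splitP => l _;
    rewrite mxE ord1.
  + apply: le_trans (Re_le _) _; apply: le_trans (abs_le_hn mulJ absR abs_ge0 u l) _.
    by rewrite lerDl.
  + apply: le_trans (Im_le _) _; apply: le_trans (abs_le_hn mulJ absR abs_ge0 u l) _.
    by rewrite lerDl.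
  + apply: le_trans (Re_le _) _; apply: le_trans (abs_le_hn mulJ absR abs_ge0 v l) _.
    by rewrite lerDr.
  + apply: le_trans (Im_le _) _; apply: le_trans (abs_le_hn mulJ absR abs_ge0 v l) _.
    by rewrite lerDr.
exact: (cor_gen conjD conjM conjK conjR mulJ absM absD absR abs_ge0 abs_eq0 absJ
  L0 e1B e2B e1L e2L esurj).
Qed.

Theorem corollary2p3 (R : realType) :
  corollary2p3_for (K := R) (fun z => z) (fun z => `|z|) /\
  corollary2p3_for (K := R[i]) (@conjc R) (@ComplexField.Normc.normc R).
Proof. by split; [exact: real_case | exact: complex_case]. Qed.
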